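(* Let $B$ be a noetherian normal integral domain and $A$ a subring of $B$. Suppose that $(\operatorname{Frac}A,\operatorname{Frac}B)\in\mathrm{EXT}$ and that there is a family $(f_i)_{i\in I}$ of elements of $A\setminus\{0\}$ such that $(A_{f_i},B_{f_i})\in\mathrm{EXT}$ for every $i\in I$ and no height-$1$ prime ideal of $B$ contains all the $f_i$. Then $(A,B)\in\mathrm{EXT}$.
   Context: For a ring $A$ and an $A$-algebra $B$, write $(A,B)\in\mathrm{EXT}$ to mean: for every derivation $\delta:A\to A$ there exists a unique derivation $D:B\to B$ such that $D\circ\varphi=\varphi\circ\delta$, where $\varphi:A\to B$ is the structure map. *)

(* Defs.v *)
From HB Require Import structures.
From mathcomp Require Import all_boot all_order all_algebra.
Set Implicit Arguments. Unset Strict Implicit. Unset Printing Implicit Defensive.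
Import Order.TTheory GRing.Theory Num.Theory.
Local Open Scope ring_scope.

(* All rings are realised as subrings of an ambient field K (subsets K -> Prop).
   Localizations and fraction fields of a subdomain of K are then the usual
   subsets of K, and all structure maps are inclusions. *)

Section Defs.
Variable K : fieldType.

Definition subring (S : K -> Prop) : Prop :=
  [/\ S 1, (forall x y, S x -> S y -> S (x - y)) & (forall x y, S x -> S y -> S (x * y))].

Definition FracOf (S : K -> Prop) : K -> Prop :=
  fun x => exists a c, [/\ S a, S c, c != 0 & x = a / c].

Definition Loc (S : K -> Prop) (f : K) : K -> Prop :=
  fun x => exists s n, S s /\ x = s / f ^+ n.

Definition is_derivation (S : K -> Prop) (d : K -> K) : Prop :=
  [/\ (forall x, S x -> S (d x)),
      (forall x y, S x -> S y -> d (x + y) = d x + d y) &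
      (forall x y, S x -> S y -> d (x * y) = d x * y + x * d y)].

Definition EXT (S T : K -> Prop) : Prop :=
  forall d, is_derivation S d ->
    exists D, [/\ is_derivation T D, (forall x, S x -> D x = d x) &
      (forall D', is_derivation T D' -> (forall x, S x -> D' x = d x) ->
         forall y, T y -> D' y = D y)].

Definition ideal_of (B P : K -> Prop) : Prop :=
  [/\ (forall x, P x -> B x), P 0,
      (forall x y, P x -> P y -> P (x + y)) &
      (forall r x, B r -> P x -> P (r * x))].

Definition prime_ideal_of (B P : K -> Prop) : Prop :=
  [/\ ideal_of B P, ~ P 1 &
      (forall a b, B a -> B b -> P (a * b) -> P a \/ P b)].

Definition height_one_prime (B P : K -> Prop) : Prop :=
  [/\ prime_ideal_of B P, (exists x, P x /\ x != 0) &
      (forall Q, prime_ideal_of B Q -> (exists x, Q x /\ x != 0) ->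
         (forall x, Q x -> P x) -> forall x, P x -> Q x)].

Definition noetherian (B : K -> Prop) : Prop :=
  forall I : nat -> K -> Prop,
    (forall n, ideal_of B (I n)) ->
    (forall n x, I n x -> I n.+1 x) ->
    exists N, forall m, (N <= m)%N -> forall x, I m x -> I N x.

Definition normal_domain (B : K -> Prop) : Prop :=
  forall x, FracOf B x ->
    (exists p : {poly K}, [/\ p \is monic, (forall i, B p`_i) & root p x]) ->
    B x.

End Defs.

(* Main.v *)
Require Import Defs.
From mathcomp Require Import all_boot all_order all_algebra.
From mathcomp Require Import ring.
From Stdlib Require Import Classical ClassicalEpsilon.
Set Implicit Arguments. Unset Strict Implicit. Unset Printing Implicit Defensive.
Import GRing.Theory.
Local Open Scope ring_scope.

Section S.
Variable K : fieldType.
Implicit Types S T : K -> Prop.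

Lemma sr0 S : subring S -> S 0.
Proof. by case=> h1 hB _; rewrite -(subrr 1); apply: hB. Qed.
Lemma sr1 S : subring S -> S 1.
Proof. by case. Qed.
Lemma srB S : subring S -> forall x y, S x -> S y -> S (x - y).
Proof. by case. Qed.
Lemma srM S : subring S -> forall x y, S x -> S y -> S (x * y).
Proof. by case. Qed.
Lemma srN S : subring S -> forall x, S x -> S (- x).
Proof. by move=> h x hx; rewrite -sub0r; apply: srB => //; apply: sr0. Qed.
Lemma srD S : subring S -> forall x y, S x -> S y -> S (x + y).
Proof. by move=> h x y hx hy; rewrite -(opprK y); apply: srB => //; apply: srN. Qed.
Lemma srX S : subring S -> forall x n, S x -> S (x ^+ n).
Proof. move=> h x n hx; elim: n => [|n ih]; first by rewrite expr0; apply: sr1.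
by rewrite exprS; apply: srM. Qed.

Definition Fd (d : K -> K) (a c : K) := (d a * c - a * d c) / (c ^+ 2).

Lemma der1 S d : subring S -> is_derivation S d -> d 1 = 0.
Proof. move=> hS [_ _ hM]; have := hM 1 1 (sr1 hS) (sr1 hS).
rewrite !mul1r mulr1 => e. by apply/eqP; move/eqP: e; rewrite eq_sym -subr_eq0 addrK. Qed.

Lemma Fd_wd S d a c a' c' : subring S -> is_derivation S d ->
  S a -> S c -> c != 0 -> S a' -> S c' -> c' != 0 -> a / c = a' / c' ->
  Fd d a c = Fd d a' c'.
Proof.
move=> hS [hm hA hM] Sa Sc c0 Sa' Sc' c'0 e.
have ea : a * c' = a' * c.
  by rewrite -[a](divfK c0) e; field.
have := congr1 d ea; rewrite hM // hM // => ed.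
have ea' : a' = a * c' / c by rewrite ea mulfK.
have eda' : d a' = (d a * c' + a * d c' - a' * d c) / c.
  by rewrite ed addrK mulfK.
rewrite /Fd eda' ea'; field; rewrite c0 c'0 //.
Qed.

Definition repP S x (ac : K * K) := [/\ S ac.1, S ac.2, ac.2 != 0 & x = ac.1 / ac.2].
Definition Dext S (d : K -> K) x :=
  let ac := epsilon (inhabits (0, 1)) (repP S x) in Fd d ac.1 ac.2.

Lemma Dext_rep S d a c : subring S -> is_derivation S d ->
  S a -> S c -> c != 0 -> Dext S d (a / c) = Fd d a c.
Proof.
move=> hS hd Sa Sc c0; rewrite /Dext.
have [] : repP S (a / c) (epsilon (inhabits (0, 1)) (repP S (a / c))).
  by apply: epsilon_spec; exists (a, c).
move=> h1 h2 h3 h4; symmetry; exact: (Fd_wd hS hd Sa Sc c0 h1 h2 h3 h4).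
Qed.

Lemma frac_ext S d : subring S -> is_derivation S d ->
  is_derivation (FracOf S) (Dext S d) /\ (forall x, S x -> Dext S d x = d x).
Proof.
move=> hS hd; have [hm hA hM] := hd.
have c2 (c : K) : c != 0 -> c ^+ 2 != 0 by move=> c0; apply: expf_neq0.
split; last first.
  move=> x Sx; rewrite -[x]divr1 (Dext_rep hS hd Sx (sr1 hS)) ?oner_neq0 //.
  rewrite /Fd (der1 hS hd) divr1 expr1n divr1; ring.
split.
- move=> _ [a [c [Sa Sc c0 ->]]]; rewrite Dext_rep //.
  exists (d a * c - a * d c), (c ^+ 2); split => //.
  + by apply: srB => //; apply: srM => //; apply: hm.
  + by apply: srX.
  + by apply: c2.
- move=> _ _ [a [c [Sa Sc c0 ->]]] [a' [c' [Sa' Sc' c'0 ->]]].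
  have cc : c * c' != 0 by rewrite mulf_neq0.
  have -> : a / c + a' / c' = (a * c' + a' * c) / (c * c') by field; rewrite c0 c'0.
  have Scc := srM hS Sc Sc'.
  have Snum := srD hS (srM hS Sa Sc') (srM hS Sa' Sc).
  rewrite (Dext_rep hS hd Sa Sc c0) (Dext_rep hS hd Sa' Sc' c'0) (Dext_rep hS hd Snum Scc cc).
  rewrite /Fd hA; try exact: (srM hS).
  rewrite !hM //; field; rewrite ?c0 ?c'0 //.
- move=> _ _ [a [c [Sa Sc c0 ->]]] [a' [c' [Sa' Sc' c'0 ->]]].
  have cc : c * c' != 0 by rewrite mulf_neq0.
  have -> : a / c * (a' / c') = (a * a') / (c * c') by field; rewrite c0 c'0.
  have Scc := srM hS Sc Sc'.
  have Snum := srM hS Sa Sa'.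
  rewrite (Dext_rep hS hd Sa Sc c0) (Dext_rep hS hd Sa' Sc' c'0) (Dext_rep hS hd Snum Scc cc).
  rewrite /Fd !hM //; field; rewrite ?c0 ?c'0 //.
Qed.

Lemma frac_unique S T d D' : is_derivation T D' ->
  (forall x, S x -> T x) -> (forall x, FracOf S x -> T x) ->
  (forall x, S x -> D' x = d x) ->
  forall a c, S a -> S c -> c != 0 -> D' (a / c) = Fd d a c.
Proof.
move=> [hm hA hM] ST FT ag a c Sa Sc c0.
have Tx : T (a / c) by apply: FT; exists a, c.
have := hM _ _ Tx (ST _ Sc); rewrite divfK // (ag a Sa) (ag c Sc) => e.
rewrite /Fd e; field; exact: c0.
Qed.
End S.

Section S2.
Variable K : fieldType.

Lemma sum_in (B : K -> Prop) (J : Type) (r : seq J) (P : pred J) (F : J -> K) : subring B ->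
  (forall j, B (F j)) -> B (\sum_(j <- r | P j) F j).
Proof.
move=> hB hF; apply: (big_ind B); [exact: sr0 | exact: srD | by move=> i _].
Qed.

Lemma int_lemma (B : K -> Prop) y c : subring B -> noetherian B -> normal_domain B ->
  FracOf B y -> B c -> c != 0 -> (forall k, B (c * y ^+ k)) -> B y.
Proof.
move=> hB hN hnorm Fy Bc c0 hk.
pose I n := fun x => exists b : nat -> K, (forall j, B (b j)) /\
   x = \sum_(j < n.+1) b j * (c * y ^+ j).
have [N HN] : exists N, forall m, (N <= m)%N -> forall x, I m x -> I N x.
  apply: hN.
  - move=> n; split.
    + move=> _ [b [hb ->]]; apply: sum_in => // j; exact: srM.
    + exists (fun _ => 0); split; first by move=> _; exact: sr0.
      by rewrite big1 // => j _; rewrite mul0r.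
    + move=> _ _ [b [hb ->]] [b' [hb' ->]]; exists (fun j => b j + b' j); split.
        by move=> j; apply: srD.
      by rewrite -big_split; apply: eq_bigr => j _; rewrite mulrDl.
    + move=> r _ Br [b [hb ->]]; exists (fun j => r * b j); split.
        by move=> j; apply: srM.
      by rewrite mulr_sumr; apply: eq_bigr => j _; rewrite mulrA.
  - move=> n _ [b [hb ->]].
    exists (fun j => if (j < n.+1)%N then b j else 0); split.
      by move=> j; case: ifP => _ //; exact: sr0.
    rewrite [RHS]big_ord_recr /= ltnn mul0r addr0.
    by apply: eq_bigr => j _; rewrite /= ltn_ord.
have : I N.+1 (c * y ^+ N.+1).
  exists (fun j => (j == N.+1)%:R); split.
    by move=> j; case: (j == N.+1); [exact: sr1 | exact: sr0].
  rewrite big_ord_recr /= eqxx mul1r big1 ?add0r // => j _.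
  by rewrite /= eq_sym gtn_eqF // mul0r.
move=> /(HN _ (leqnSn N)) [b [hb e]].
apply: hnorm => //.
exists (\poly_(i < N.+2) (if i == N.+1 then 1 else - b i)).
have sz : size (\poly_(i < N.+2) (if i == N.+1 then 1 else - b i)) = N.+2.
  by apply: size_poly_eq; rewrite /= eqxx oner_neq0.
split.
- by rewrite monicE lead_coefE sz /= coef_poly ltnSn eqxx.
- move=> i; rewrite coef_poly; case: ifP => _; last exact: sr0.
  by case: ifP => _; [exact: sr1 | apply: srN].
- rewrite /root horner_poly big_ord_recr /= eqxx mul1r.
  apply/eqP; apply: (mulfI c0); rewrite mulr0 mulrDr e mulr_sumr -big_split /=.
  apply: big1 => j _; rewrite /= (ltn_eqF (ltn_ord j)); ring.
Qed.

Lemma acc_max (B : K -> Prop) (T : Type) (Fam : T -> Prop) (J : T -> K -> Prop) t0 :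
  noetherian B -> (forall t, ideal_of B (J t)) -> Fam t0 ->
  exists t, Fam t /\ forall t', Fam t' -> (forall x, J t x -> J t' x) ->
     forall x, J t' x -> J t x.
Proof.
move=> hN hJ f0; apply: NNPP => H.
have step : forall t : {t | Fam t}, {t' : {t | Fam t} |
    (forall x, J (proj1_sig t) x -> J (proj1_sig t') x) /\
    exists x, J (proj1_sig t') x /\ ~ J (proj1_sig t) x}.
  move=> [t ft]; apply: constructive_indefinite_description.
  apply: NNPP => H2; apply: H; exists t; split => // t' ft' sub x jx.
  apply: NNPP => nj; apply: H2; exists (exist _ t' ft'); split => //.
  by exists x.
pose g t := proj1_sig (step t).
pose sq n := iter n g (exist _ t0 f0).
have [N HN] := hN (fun n => J (proj1_sig (sq n))) (fun n => hJ _)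
  (fun n => proj1 (proj2_sig (step (sq n)))).
have [x [jx njx]] := proj2 (proj2_sig (step (sq N))).
by apply: njx; apply: (HN N.+1 (leqnSn N)).
Qed.

Lemma prime_pow (B Q : K -> Prop) a k : subring B -> prime_ideal_of B Q -> B a ->
  Q (a ^+ k) -> Q a.
Proof.
move=> hB [_ nQ1 hP] Ba; elim: k => [|k ih]; first by rewrite expr0.
rewrite exprS => h; case: (hP _ _ Ba (srX hB k Ba) h) => //; exact: ih.
Qed.

Lemma krull (B : K -> Prop) x : subring B -> noetherian B -> normal_domain B ->
  FracOf B x -> ~ B x ->
  exists P, height_one_prime B P /\ forall b, B b -> B (b * x) -> P b.
Proof.
move=> hB hN hnorm Fx nBx.
pose Fam z := exists b, [/\ B b, z = b * x & ~ B z].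
pose J z := fun u => B u /\ B (u * z).
have idJ z : ideal_of B (J z).
  split.
  - by move=> u [].
  - by split; [exact: sr0 | rewrite mul0r; exact: sr0].
  - move=> u v [Bu Buz] [Bv Bvz]; split; first exact: srD.
    by rewrite mulrDl; apply: srD.
  - move=> r u Br [Bu Buz]; split; first exact: srM.
    by rewrite -mulrA; apply: srM.
have f0 : Fam x by exists 1; rewrite mul1r; split => //; exact: sr1.
have [y [[b0 [Bb0 ey nBy]] ymax]] := acc_max hN idJ f0.
have [a [c [Ba Bc c0 ex]]] := Fx.
have Jxy u : B u -> B (u * x) -> J y u.
  move=> Bu Bux; split => //; rewrite ey mulrA (mulrC u) -mulrA; exact: srM.
have Pc : J y c by apply: Jxy => //; rewrite ex mulrC divfK.
have Fy : FracOf B y.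
  exists (b0 * a), c; split => //; first exact: srM.
  by rewrite ey ex mulrA.
have Pprime : prime_ideal_of B (J y).
  split => //.
  - by move=> [_]; rewrite mul1r.
  - move=> u v Bu Bv [_ Buvy]; case: (classic (J y u)) => [|nPu]; first by left.
    have nBuy : ~ B (u * y) by move=> h; apply: nPu.
    have Fuy : Fam (u * y) by exists (u * b0); split => //; [exact: srM | rewrite ey mulrA].
    have sub : forall w, J y w -> J (u * y) w.
      move=> w [Bw Bwy]; split => //; rewrite mulrA (mulrC w) -mulrA; exact: srM.
    right; apply: (ymax _ Fuy sub); split => //.
    by rewrite mulrA (mulrC v u).
exists (J y); split; last by move=> u Bu Bux; apply: Jxy.
split => //; first by exists c; split.
move=> Q QP [q [Qq q0]] QsubP p Pp.
have [[QB _ _ Qmul] nQ1 Qpr] := QP.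
have PB w : J y w -> B w by case.
have [p0 [Pp0 nPs]] : exists p0, J y p0 /\ ~ J y (p0 * y).
  apply: NNPP => H; apply: nBy.
  have allP w : J y w -> J y (w * y).
    by move=> Jw; apply: NNPP => nJ; apply: H; exists w.
  apply: (int_lemma hB hN hnorm Fy (PB _ Pc) c0) => k.
  apply: PB; elim: k => [|k ih]; first by rewrite expr0 mulr1.
  by rewrite exprSr mulrA; apply: allP.
set s := p0 * y in nPs.
have Bs : B s by case: Pp0.
have Bp0 : B p0 by case: Pp0.
have [k [Bw nPw]] : exists k, B (q * y ^+ k) /\ ~ J y (q * y ^+ k).
  apply: NNPP => H; apply: nBy.
  apply: (int_lemma hB hN hnorm Fy (QB _ Qq) q0) => k.
  elim: k => [|k ih]; first by rewrite expr0 mulr1; apply: QB.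
  have : J y (q * y ^+ k) by apply: NNPP => nJ; apply: H; exists k.
  by case=> _; rewrite exprSr mulrA.
have Qp0 : Q p0.
  have : Q (p0 ^+ k * (q * y ^+ k)).
    have -> : p0 ^+ k * (q * y ^+ k) = s ^+ k * q by rewrite /s exprMn; ring.
    by apply: Qmul => //; apply: srX.
  case/(Qpr _ _ (srX hB k Bp0) Bw).
    exact: (prime_pow hB QP Bp0).
  by move/QsubP.
have Bpy : B (p * y) by case: Pp.
have : Q (s * p).
  have -> : s * p = (p * y) * p0 by rewrite /s; ring.
  by apply: Qmul.
case/(Qpr _ _ Bs (PB _ Pp)) => //.
by move/QsubP.
Qed.
End S2.

Section S3.
Variable K : fieldType.
Implicit Types S T : K -> Prop.

Lemma sub_frac S x : subring S -> S x -> FracOf S x.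
Proof. by move=> hS Sx; exists x, 1; split; rewrite ?divr1 ?oner_neq0 //; exact: sr1. Qed.

Lemma frac_mono S T x : (forall y, S y -> T y) -> FracOf S x -> FracOf T x.
Proof. by move=> ST [a [c [Sa Sc c0 ->]]]; exists a, c; split; auto. Qed.

Lemma S_loc S f x : subring S -> S x -> Loc S f x.
Proof. by move=> hS Sx; exists x, 0%N; rewrite expr0 divr1. Qed.

Lemma loc_mono S T f x : (forall y, S y -> T y) -> Loc S f x -> Loc T f x.
Proof. by move=> ST [s [n [Ss ->]]]; exists s, n; auto. Qed.

Lemma loc_frac S f x : subring S -> S f -> f != 0 -> Loc S f x -> FracOf S x.
Proof.
move=> hS Sf f0 [s [n [Ss ->]]]; exists s, (f ^+ n); split => //.
  exact: srX. exact: expf_neq0.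
Qed.

Lemma loc_subring S f : subring S -> S f -> f != 0 -> subring (Loc S f).
Proof.
move=> hS Sf f0; split.
- by apply: S_loc => //; exact: sr1.
- move=> _ _ [s [n [Ss ->]]] [s' [m [Ss' ->]]].
  exists (s * f ^+ m - s' * f ^+ n), (n + m)%N; split.
    exact: (srB hS (srM hS Ss (srX hS m Sf)) (srM hS Ss' (srX hS n Sf))).
  have fn : f ^+ n != 0 by apply: expf_neq0.
  have fm : f ^+ m != 0 by apply: expf_neq0.
  rewrite exprD; field; by rewrite ?fn ?fm.
- move=> _ _ [s [n [Ss ->]]] [s' [m [Ss' ->]]].
  exists (s * s'), (n + m)%N; split; first exact: srM.
  have fn : f ^+ n != 0 by apply: expf_neq0.
  have fm : f ^+ m != 0 by apply: expf_neq0.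
  rewrite exprD; field; by rewrite ?fn ?fm.
Qed.

Lemma frac_loc S f x : subring S -> S f -> f != 0 ->
  FracOf (Loc S f) x <-> FracOf S x.
Proof.
move=> hS Sf f0; split; last by apply: frac_mono => y; apply: S_loc.
move=> [_ [_ [[s [n [Ss ->]]] [s' [m [Ss' ->]]] c0 ->]]].
have fn : f ^+ n != 0 by apply: expf_neq0.
have fm : f ^+ m != 0 by apply: expf_neq0.
have s'0 : s' != 0 by apply: contraNneq c0 => ->; rewrite mul0r.
exists (s * f ^+ m), (s' * f ^+ n); split.
- by apply: srM => //; apply: srX.
- by apply: srM => //; apply: srX.
- by rewrite mulf_neq0.
- field; by rewrite ?fn ?fm ?s'0.
Qed.

Lemma der_ext S T D : (forall x, S x <-> T x) -> is_derivation S D -> is_derivation T D.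
Proof.
move=> e [hm hA hM]; split.
- by move=> x /e Sx; apply/e; apply: hm.
- by move=> x y /e Sx /e Sy; apply: hA.
- by move=> x y /e Sx /e Sy; apply: hM.
Qed.

Lemma der_restr S T D : (forall x, S x -> T x) -> is_derivation T D ->
  (forall x, S x -> S (D x)) -> is_derivation S D.
Proof.
move=> ST [hm hA hM] hS; split => //.
- by move=> x y Sx Sy; apply: hA; apply: ST.
- by move=> x y Sx Sy; apply: hM; apply: ST.
Qed.
End S3.

Lemma krull_loc (K : fieldType) (B : K -> Prop) (I : Type) (f : I -> K) z :
  subring B -> noetherian B -> normal_domain B ->
  (forall i, B (f i) /\ f i != 0) ->
  (forall P, height_one_prime B P -> exists i, ~ P (f i)) ->
  FracOf B z -> (forall i, Loc B (f i) z) -> B z.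
Proof.
move=> hB hN hnorm hf hht Fz hz; apply: NNPP => nBz.
have [P [hP Psub]] := krull hB hN hnorm Fz nBz.
have [i nPi] := hht P hP.
have [Bf f0] := hf i.
have [s [n [Bs ez]]] := hz i.
apply: nPi; have [hP1 _ _] := hP.
apply: (prime_pow hB hP1 Bf (k := n)); apply: Psub; first exact: srX.
by rewrite ez mulrC divfK // expf_neq0.
Qed.

Theorem lemma3p5 (K : fieldType) (A B : K -> Prop) (I : Type) (f : I -> K) :
  subring B -> noetherian B -> normal_domain B ->
  subring A -> (forall x, A x -> B x) ->
  EXT (FracOf A) (FracOf B) ->
  (forall i, A (f i) /\ f i != 0) ->
  (forall i, EXT (Loc A (f i)) (Loc B (f i))) ->
  (forall P, height_one_prime B P -> exists i, ~ P (f i)) ->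
  EXT A B.
Proof.
move=> hB hN hnorm hA AB hEXT hf hloc hht d hd.
have [hdA agA] := frac_ext hA hd.
set dA := Dext A d in hdA agA.
have [D [hD agD uniq]] := hEXT dA hdA.
have FAB x : FracOf A x -> FracOf B x by apply: frac_mono.
have BFB x : B x -> FracOf B x by apply: sub_frac.
have key E : is_derivation (FracOf B) E -> (forall a, A a -> E a = d a) ->
    forall y, FracOf B y -> E y = D y.
  move=> hE agE; apply: uniq => // _ [a [c [Aa Ac c0 ->]]].
  rewrite (frac_unique hE (fun x Ax => BFB x (AB x Ax)) FAB agE Aa Ac c0).
  by rewrite /dA (Dext_rep hA hd Aa Ac c0).
have Dloc i y : Loc B (f i) y -> Loc B (f i) (D y).
  have [Af f0] := hf i.
  have hLA := loc_subring hA Af f0.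
  have hLB := loc_subring hB (AB _ Af) f0.
  have hdi : is_derivation (Loc A (f i)) dA.
    apply: (der_restr (T := FracOf A)) => //.
      by move=> x; apply: loc_frac.
    move=> _ [s [n [As ->]]].
    have fn : f i ^+ n != 0 by apply: expf_neq0.
    rewrite /dA (Dext_rep hA hd As (srX hA n Af) fn) /Fd -exprM.
    exists (d s * f i ^+ n - s * d (f i ^+ n)), (n * 2)%N; split => //.
    have [hm _ _] := hd.
    apply: srB hA _ _ (srM hA (hm _ As) (srX hA n Af)) (srM hA As (hm _ (srX hA n Af))).
  have [Di [hDi agDi _]] := hloc i dA hdi.
  have [hEi agEi] := frac_ext hLB hDi.
  have hEi' := der_ext (fun x => frac_loc x hB (AB _ Af) f0) hEi.
  have eqE := key _ hEi' (fun a Aa => etrans (agEi a (S_loc (f i) hB (AB _ Aa)))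
       (etrans (agDi a (S_loc (f i) hA Aa)) (agA a Aa))).
  move=> Ly.
  have FBy : FracOf B y by apply: (loc_frac hB (AB _ Af) f0).
  rewrite -(eqE y FBy) (agEi y Ly).
  by have [hm _ _] := hDi; apply: hm.
have DB b : B b -> B (D b).
  move=> Bb; apply: (krull_loc hB hN hnorm (f := f)).
  - by move=> i; have [Af f0] := hf i; split => //; apply: AB.
  - exact: hht.
  - by have [hm _ _] := hD; apply: hm; apply: BFB.
  - by move=> i; apply: Dloc; apply: S_loc.
exists D; split.
- exact: (der_restr BFB hD DB).
- by move=> a Aa; rewrite agD; [exact: agA | exact: sub_frac].
- move=> D' hD' agD' y By.
  have [hE' agE'] := frac_ext hB hD'.
  have eq' := key _ hE' (fun a Aa => etrans (agE' a (AB _ Aa)) (agD' a Aa)).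
  by rewrite -(agE' y By) eq' //; apply: BFB.
Qed.
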